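(* Define $X:\Delta^{\mathrm{re}}\to\mathrm{End}(\mathfrak h^* )$ by $$X(\alpha):=-\alpha\,(\alpha|\cdot)+\tfrac12\,\mathrm{id}_{\mathfrak h^*},\qquad\text{i.e. } X(\alpha)(x)=-(\alpha|x)\alpha+\tfrac12x.$$ Then for all real roots $\alpha,\beta$: $X(\alpha)X(\beta)-X(\beta)X(\alpha)=0$ if $(\alpha|\beta)=0$, and $X(\alpha)X(\beta)+X(\beta)X(\alpha)=X(\alpha\pm\beta)$ if $(\alpha|\beta)=\mp1$. Consequently the assignment $X_i\mapsto X(\alpha_i)\otimes\Gamma(\alpha_i)\in\mathrm{End}(\mathfrak h^*\otimes S)$ extends to a representation $\sigma$ of $\mathfrak k$.
   Context: Let $A=(a_{ij})_{1\le i,j\le n}$ be a symmetrizable simply laced generalized Cartan matrix (off-diagonal entries $0$ or $-1$); the Dynkin diagram has an edge between $i\ne j$ iff $a_{ij}=-1$. Let $\mathfrak g$ be the split real Kac–Moody algebra of $A$ with Chevalley generators $e_i,f_i$, Cartan subalgebra $\mathfrak h$ (from a real realization), simple roots $\alpha_1,\dots,\alpha_n\in\mathfrak h^*$, set of real roots $\Delta^{\mathrm{re}}$, and let $(\cdot|\cdot)$ be the nondegenerate invariant symmetric bilinear form induced on $\mathfrak h^*$, with $(\alpha_i|\alpha_j)=a_{ij}$ (so $(\alpha|\alpha)=2$ for real roots). Let $\mathfrak k$ be the fixed-point subalgebra of the Chevalley involution ($e_i\mapsto -f_i$, $f_i\mapsto-e_i$, $h\mapsto -h$), with Berman generators $X_i=e_i-f_i$;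 $\mathfrak k$ is presented by generators $X_1,\dots,X_n$ and relations $[X_i,[X_i,X_j]]=-X_j$ if $a_{ij}=-1$, $[X_i,X_j]=0$ if $a_{ij}=0$. A generalized spin representation is a representation $\rho$ of $\mathfrak k$ with $\rho(X_i)^2=-\frac14\mathrm{id}$. Fix a finite-dimensional real vector space $S$ with positive definite inner product and orthonormal basis, and a generalized spin representation $\rho:\mathfrak k\to\mathrm{End}(S)$ whose values $\rho(X_i)$ are anti-symmetric real matrices in this basis (such exist, e.g. by realifying the generalized spin representations with compact image of Hainke–Köhl–Levy); put $\Gamma(\alpha_i):=2\rho(X_i)$. *)

(* Defs.v *)
From HB Require Import structures.
From mathcomp Require Import all_boot all_order all_algebra.
From mathcomp Require Export mxtens.
From mathcomp Require Import reals.
Set Implicit Arguments. Unset Strict Implicit. Unset Printing Implicit Defensive.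
Import Order.TTheory GRing.Theory Num.Theory.
Local Open Scope ring_scope.

Definition simply_laced_GCM (n : nat) (A : 'M[int]_n) : Prop :=
  (forall i, A i i = 2%:Z) /\
  (forall i j, i != j -> A i j = 0 \/ A i j = -1) /\
  (forall i j, A i j = 0 <-> A j i = 0).

(* h^* is modelled as column vectors 'cV[R]_m; the invariant form is
   (x|y) = x^T G y for a symmetric invertible matrix G. *)
Definition bform (R : pzRingType) (m : nat) (G : 'M[R]_m) (x y : 'cV[R]_m) : R :=
  (x^T *m G *m y) 0 0.

Definition rootmx (R : pzRingType) (m n : nat) (alpha : 'I_n -> 'cV[R]_m)
  : 'M[R]_(m, n) := \matrix_(k, i) alpha i k 0.

(* Simple reflection s_i(x) = x - (alpha_i | x) alpha_i  (since (alpha_i|alpha_i)=2). *)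
Definition sreflect (R : pzRingType) (m n : nat) (G : 'M[R]_m)
  (alpha : 'I_n -> 'cV[R]_m) (i : 'I_n) (x : 'cV[R]_m) : 'cV[R]_m :=
  x - bform G (alpha i) x *: alpha i.

Inductive real_root (R : pzRingType) (m n : nat) (G : 'M[R]_m)
  (alpha : 'I_n -> 'cV[R]_m) : 'cV[R]_m -> Prop :=
| real_root_simple i : real_root G alpha (alpha i)
| real_root_refl i x : real_root G alpha x -> real_root G alpha (sreflect G alpha i x).

Definition Xop (R : fieldType) (m : nat) (G : 'M[R]_m) (a : 'cV[R]_m) : 'M[R]_m :=
  (2%:R^-1)%:M - a *m (a^T *m G).

Definition mxcomm (R : pzRingType) (k : nat) (P Q : 'M[R]_k) : 'M[R]_k :=
  P *m Q - Q *m P.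

(* A family Y_i of endomorphisms of R^k satisfies the defining relations of
   the presentation of k (Berman generators); by the universal property of the
   presented Lie algebra k, this is exactly the statement that X_i |-> Y_i
   extends to a representation of k. *)
Definition krep_relations (R : pzRingType) (n k : nat) (A : 'M[int]_n)
  (Y : 'I_n -> 'M[R]_k) : Prop :=
  forall i j, i != j ->
    (A i j = -1 -> mxcomm (Y i) (mxcomm (Y i) (Y j)) = - Y j) /\
    (A i j = 0 -> mxcomm (Y i) (Y j) = 0).

Definition gen_spin_rep (R : fieldType) (n k : nat) (A : 'M[int]_n)
  (rho : 'I_n -> 'M[R]_k) : Prop :=
  krep_relations A rho /\ (forall i, rho i *m rho i = - (4%:R^-1)%:M).

Definition Gamma (R : pzRingType) (n k : nat) (rho : 'I_n -> 'M[R]_k) (i : 'I_n)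
  : 'M[R]_k := 2%:R *: rho i.

(* Main.v *)
Require Import Defs.
From HB Require Import structures.
From mathcomp Require Import all_boot all_order all_algebra.
From mathcomp Require Import mxtens reals.
From mathcomp Require Import ring lra.
Set Implicit Arguments. Unset Strict Implicit.
Import Order.TTheory GRing.Theory Num.Theory.
Local Open Scope ring_scope.

Section Core.
Variables (R : realType) (m : nat) (G : 'M[R]_m).
Hypothesis HG : G^T = G.

Fact Qkey : unit. Proof. by []. Qed.
Definition Q (a b : 'cV[R]_m) : 'M[R]_m := locked_with Qkey (a *m (b^T *m G)).
Lemma QE a b : Q a b = a *m (b^T *m G). Proof. by rewrite /Q unlock. Qed.

Lemma bformC a b : bform G a b = bform G b a.
Proof.
have E : (a^T *m G *m b)^T = b^T *m G *m a by rewrite !trmx_mul trmxK HG mulmxA.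
by rewrite /bform -E [in RHS]mxE.
Qed.

Lemma bformDl a b c : bform G (a + b) c = bform G a c + bform G b c.
Proof. by rewrite /bform linearD /= !mulmxDl mxE. Qed.
Lemma bformDr a b c : bform G a (b + c) = bform G a b + bform G a c.
Proof. by rewrite /bform !mulmxDr mxE. Qed.
Lemma bformNl a c : bform G (- a) c = - bform G a c.
Proof. by rewrite /bform linearN /= !mulNmx mxE. Qed.
Lemma bformNr a c : bform G a (- c) = - bform G a c.
Proof. by rewrite /bform !mulmxN mxE. Qed.
Lemma bformZl k a c : bform G (k *: a) c = k * bform G a c.
Proof. by rewrite /bform linearZ /= -!scalemxAl mxE. Qed.

Lemma Qmul a b c d : Q a b *m Q c d = bform G b c *: Q a d.
Proof.
rewrite !QE.
have -> : a *m (b^T *m G) *m (c *m (d^T *m G)) = a *m (b^T *m G *m c) *m (d^T *m G)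
  by rewrite !mulmxA.
by rewrite [b^T *m G *m c]mx11_scalar mul_mx_scalar -scalemxAl.
Qed.

Lemma QDl a b c : Q (a + b) c = Q a c + Q b c.
Proof. by rewrite !QE mulmxDl. Qed.
Lemma QDr a b c : Q a (b + c) = Q a b + Q a c.
Proof. by rewrite !QE linearD /= mulmxDl mulmxDr. Qed.
Lemma QNl a c : Q (- a) c = - Q a c.
Proof. by rewrite !QE mulNmx. Qed.
Lemma QNr a c : Q a (- c) = - Q a c.
Proof. by rewrite !QE linearN /= mulNmx mulmxN. Qed.

Local Notation h := (2%:R^-1 : R).

Lemma XopE a : Xop G a = h%:M - Q a a.
Proof. by rewrite QE. Qed.

Lemma Xmul a b : Xop G a *m Xop G b =
  (h * h)%:M - h *: Q b b - h *: Q a a + bform G a b *: Q a b.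
Proof.
rewrite !XopE mulmxBl !mulmxBr !mul_scalar_mx mul_mx_scalar Qmul.
apply/matrixP => i j; rewrite !mxE; ring.
Qed.

Lemma Xrels a b : bform G a a = 2%:R -> bform G b b = 2%:R ->
     (bform G a b = 0 -> Xop G a *m Xop G b - Xop G b *m Xop G a = 0) /\
     (bform G a b = -1 -> Xop G a *m Xop G b + Xop G b *m Xop G a = Xop G (a + b)) /\
     (bform G a b = 1 -> Xop G a *m Xop G b + Xop G b *m Xop G a = Xop G (a - b)).
Proof.
move=> Ha Hb; rewrite !Xmul [bform G b a]bformC.
split; [|split] => ->; rewrite ?XopE ?QDl ?QDr ?QNl ?QNr;
  apply/matrixP => i j; rewrite !mxE.
all: by field.
Qed.

Lemma bformZr k a c : bform G a (k *: c) = k * bform G a c.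
Proof. by rewrite bformC bformZl bformC. Qed.

Lemma XopN a : Xop G (- a) = Xop G a.
Proof. by rewrite !XopE QNl QNr opprK. Qed.

Lemma rr_norm (n : nat) (alpha : 'I_n -> 'cV[R]_m) x :
  (forall i, bform G (alpha i) (alpha i) = 2%:R) ->
  real_root G alpha x -> bform G x x = 2%:R.
Proof.
move=> Hi; elim => [i|i y _ IH]; first exact: Hi.
rewrite /sreflect !(bformDl, bformDr, bformNl, bformNr, bformZl, bformZr).
rewrite IH Hi [bform G y (alpha i)]bformC; ring.
Qed.

End Core.

Section Tens.
Variables (R : comPzRingType) (m n p q : nat).
Lemma tensDl (A B : 'M[R]_(m, n)) (C : 'M[R]_(p, q)) : (A + B) *t C = A *t C + B *t C.
Proof. by apply/matrixP => i j; rewrite !mxE mulrDl. Qed.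
Lemma tensNl (A : 'M[R]_(m, n)) (C : 'M[R]_(p, q)) : (- A) *t C = - (A *t C).
Proof. by apply/matrixP => i j; rewrite !mxE mulNr. Qed.
Lemma tensNr (A : 'M[R]_(m, n)) (C : 'M[R]_(p, q)) : A *t (- C) = - (A *t C).
Proof. by apply/matrixP => i j; rewrite !mxE mulrN. Qed.
End Tens.

Lemma anti (R : realType) (N : nat) (p q : 'M[R]_N) :
  p *m p = - (4%:R^-1)%:M -> mxcomm p (mxcomm p q) = - q -> p *m q = - (q *m p).
Proof.
move=> Hsq H.
have H2 := congr1 (fun M => M *m p) H; rewrite /= /mxcomm in H2.
have hl M : M *m p *m p = - (4%:R^-1 *: M) by rewrite -mulmxA Hsq mulmxN mul_mx_scalar.
move: H2; rewrite !(mulmxBl, mulmxBr) !mulmxA !hl Hsq.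
rewrite ?mulNmx ?mul_scalar_mx -?scalemxAl.
move: (p *m q) (q *m p) => U V H2.
apply/matrixP => i j; move/matrixP/(_ i j): H2; rewrite !mxE => H2; lra.
Qed.


Theorem proposition5p3 (R : realType) (n m N : nat) (A : 'M[int]_n)
  (G : 'M[R]_m) (alpha : 'I_n -> 'cV[R]_m) (rho : 'I_n -> 'M[R]_N) :
  simply_laced_GCM A ->
  G^T = G -> G \in unitmx ->
  (forall i j, bform G (alpha i) (alpha j) = (A i j)%:~R) ->
  \rank (rootmx alpha) = n ->
  m = (2 * n - \rank (map_mx intr A : 'M[R]_n))%N ->
  gen_spin_rep A rho ->
  (forall i, (rho i)^T = - rho i) ->
  (forall a b, real_root G alpha a -> real_root G alpha b ->
     (bform G a b = 0 -> Xop G a *m Xop G b - Xop G b *m Xop G a = 0) /\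
     (bform G a b = -1 -> Xop G a *m Xop G b + Xop G b *m Xop G a = Xop G (a + b)) /\
     (bform G a b = 1 -> Xop G a *m Xop G b + Xop G b *m Xop G a = Xop G (a - b)))
  /\ krep_relations A (fun i => Xop G (alpha i) *t Gamma rho i).
Proof.
move=> [Hdiag [Hoff Hsym]] HG _ Hb _ _ [Hrho Hsq] _.
have Hii i : bform G (alpha i) (alpha i) = 2%:R by rewrite Hb Hdiag.
split.
  move=> a b ra rb; apply: (Xrels HG); [exact: (rr_norm HG Hii ra) | exact: (rr_norm HG Hii rb)].
move=> i j ij; have [Hr1 Hr0] := Hrho i j ij; split => Aij.
- have hb : bform G (alpha i) (alpha j) = -1 by rewrite Hb Aij.
  have hb' : bform G (alpha j) (alpha i) = -1 by rewrite bformC.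
  have an := anti (Hsq i) (Hr1 Aij).
  set gi := Gamma rho i; set gj := Gamma rho j.
  have gsq : gi *m gi = - 1%:M.
    rewrite /gi /Gamma -scalemxAl -scalemxAr Hsq scalerA.
    by apply/matrixP => k l; rewrite !mxE; field.
  have ganti : gj *m gi = - (gi *m gj).
    by rewrite /gi /gj /Gamma -!scalemxAl -!scalemxAr an !scalerN opprK.
  have e1 : gi *m (gi *m gj) = - gj by rewrite mulmxA gsq mulNmx mul1mx.
  have e2 : gi *m gj *m gi = gj.
    by rewrite -[gi *m gj]opprK -ganti mulNmx -mulmxA gsq mulmxN mulmx1 opprK.
  have [_ [X2 _]] := Xrels HG (Hii i) (Hii j).
  rewrite {2}/mxcomm !tensmx_mul ganti tensNr opprK -tensDl (X2 hb).
  have Hc : bform G (alpha i + alpha j) (alpha i + alpha j) = 2%:R.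
    rewrite !(bformDl, bformDr) Hii Hii hb hb'; ring.
  have Hic : bform G (alpha i) (alpha i + alpha j) = 1.
    rewrite !(bformDl, bformDr) Hii hb; ring.
  have [_ [_ X3]] := Xrels HG (Hii i) Hc.
  rewrite /mxcomm !tensmx_mul e1 e2 tensNr -opprD -tensDl (X3 Hic).
  by rewrite opprD addrA subrr add0r XopN.
- have hb : bform G (alpha i) (alpha j) = 0 by rewrite Hb Aij.
  have [X1 _] := Xrels HG (Hii i) (Hii j).
  have cx := X1 hb; move/eqP: cx; rewrite subr_eq0 => /eqP cx.
  have cr := Hr0 Aij; move/eqP: cr; rewrite /mxcomm subr_eq0 => /eqP cr.
  rewrite /mxcomm !tensmx_mul cx /Gamma -!scalemxAl -!scalemxAr cr.
  by rewrite subrr.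
Qed.
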